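(* Let $X$ be a real reflexive Banach space, $T:X\rightrightarrows X^{\ast}$ maximally monotone, and $h,h'\in\mathcal{H}(T)$; set $E=L^{h}$ and $E'=L^{h'}$. Then: (i) $E$ and $E'$ are mutually additive if and only if $h^{\ast}\circ i\le h'$; in particular, $E$ is additive if and only if $h^{\ast}\circ i\le h$; (ii) $h=h^{\ast}\circ i$ if and only if $L^{h}$ is maximally additive. In particular, $E$ is mutually additive with $L^{h^{\ast}\circ i}$, and $L^{h^{\ast}\circ i}$ contains (in the sense $E''(\epsilon,x)\subset L^{h^{\ast}\circ i}(\epsilon,x)$ for all $\epsilon\ge0,x\in X$) every enlargement $E''=L^{g}$, $g\in\mathcal{H}(T)$, that is mutually additive with $E$.
   Context: $X^{\ast}$ is the dual of $X$ with pairing $\langle\cdot,\cdot\rangle$. The dual of $X\times X^{\ast}$ is identified with $X^{\ast}\times X$ via $\langle (x,x^{\ast}),(y^{\ast},y)\rangle=\langle x,y^{\ast}\rangle+\langle y,x^{\ast}\rangle$; for $g:X\times X^{\ast}\to\mathbb{R}\cup\{+\infty\}$, $g^{\ast}(y^{\ast},y)=\sup_{(x,x^{\ast})}\{\langle x,y^{\ast}\rangle+\langle y,x^{\ast}\rangle-g(x,x^{\ast})\}$, and $i(x,x^{\ast})=(x^{\ast},x)$. $\mathcal{H}(T)$ is the family of lower semicontinuous convex $h:X\times X^{\ast}\to\mathbb{R}\cup\{+\infty\}$ with $h(x,x^{\ast})\ge\langle x,x^{\ast}\rangle$ everywhere and equality whenever $x^{\ast}\in T(x)$ (if $h\in\mathcal{H}(T)$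 then $h^{\ast}\circ i\in\mathcal{H}(T)$). For $g\in\mathcal{H}(T)$, $L^{g}:[0,\infty)\times X\rightrightarrows X^{\ast}$ is $L^{g}(\epsilon,x)=\{x^{\ast}:g(x,x^{\ast})\le\langle x,x^{\ast}\rangle+\epsilon\}$; every enlargement in the family $\mathbb{E}(T)$ is of the form $L^g$ for a unique $g\in\mathcal{H}(T)$. Two enlargements $E,E'$ are mutually additive if $\langle x-y,x^{\ast}-y^{\ast}\rangle\ge-(\epsilon+\eta)$ for all $\epsilon,\eta\ge0$, $x,y\in X$, $x^{\ast}\in E(\epsilon,x)$, $y^{\ast}\in E'(\eta,y)$; $E$ is additive if it is mutually additive with itself. An additive $E=L^{h}$ is maximally additive if whenever $E'=L^{g}$ ($g\in\mathcal{H}(T)$) is additive with $E(\epsilon,x)\subset E'(\epsilon,x)$ for all $\epsilon\ge0$, $x\in X$, then $E=E'$. *)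

(* Defs.v *)
From HB Require Import structures.
From mathcomp Require Import all_boot all_order all_algebra.
From mathcomp Require Import all_classical all_reals all_analysis.
Set Implicit Arguments. Unset Strict Implicit. Unset Printing Implicit Defensive.
Import Order.TTheory GRing.Theory Num.Theory.
Import numFieldNormedType.Exports.
Local Open Scope classical_set_scope.
Local Open Scope ring_scope.

Section Dual.
Variables (R : realType) (X : normedModType R).

Record dual := Dual {
  dfun :> X -> R;
  dfunD : forall x y, dfun (x + y) = dfun x + dfun y;
  dfunZ : forall (a : R) x, dfun (a *: x) = a * dfun x;
  dfun_cont : continuous dfun }.

Definition pairing (x : X) (f : dual) : R := f x.

Definition ddist (f g : dual) : R :=
  sup [set `|f z - g z| | z in [set z : X | `|z| <= 1]].

Definition dnorm (f : dual) : R :=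
  sup [set `|f z| | z in [set z : X | `|z| <= 1]].

Definition bidual_elt (phi : dual -> R) : Prop :=
  (forall f g k : dual, (forall z, k z = f z + g z) -> phi k = phi f + phi g) /\
  (forall (a : R) (f k : dual), (forall z, k z = a * f z) -> phi k = a * phi f) /\
  (exists C : R, forall f, `|phi f| <= C * dnorm f).

Definition reflexive_space : Prop :=
  forall phi : dual -> R, bidual_elt phi -> exists x : X, forall f, phi f = f x.

Definition monotone_op (T : X -> set dual) : Prop :=
  forall x y f g, T x f -> T y g -> 0 <= pairing (x - y) f - pairing (x - y) g.

Definition maximal_monotone (T : X -> set dual) : Prop :=
  monotone_op T /\
  forall x f, (forall y g, T y g -> 0 <= pairing (x - y) f - pairing (x - y) g) ->
    T x f.

Local Open Scope ereal_scope.

(* lower semicontinuity w.r.t. the norm topology of X x X^*: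
   every sublevel set is (sequentially) closed *)
Definition lsc (h : X -> dual -> \bar R) : Prop :=
  forall (u : nat -> X) (v : nat -> dual) (x : X) (f : dual) (r : R),
    ((fun n => `|u n - x|%R) @ \oo --> (0%R : R))%classic ->
    ((fun n => ddist (v n) f) @ \oo --> (0%R : R))%classic ->
    (forall n, h (u n) (v n) <= r%:E) -> h x f <= r%:E.

(* convexity on X x X^* (k is the convex combination t f1 + (1-t) f2) *)
Definition convex_fun (h : X -> dual -> \bar R) : Prop :=
  forall (t : R) (x1 x2 : X) (f1 f2 k : dual), (0 < t < 1)%R ->
    (forall z, k z = t * f1 z + (1 - t) * f2 z)%R ->
    h (t *: x1 + (1 - t) *: x2)%R k <= t%:E * h x1 f1 + (1 - t)%:E * h x2 f2.

Definition HT (T : X -> set dual) (h : X -> dual -> \bar R) : Prop :=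
  lsc h /\ convex_fun h /\
  (forall x f, (pairing x f)%:E <= h x f) /\
  (forall x f, T x f -> h x f = (pairing x f)%:E).

Definition hstar_i (h : X -> dual -> \bar R) (x : X) (f : dual) : \bar R :=
  ereal_sup [set (pairing p.1 f + pairing x p.2)%:E - h p.1 p.2
            | p in [set: X * dual]].

Definition Lenl (g : X -> dual -> \bar R) (eps : R) (x : X) : set dual :=
  [set f | g x f <= (pairing x f + eps)%:E].

Local Close Scope ereal_scope.

Definition mutually_additive (E E' : R -> X -> set dual) : Prop :=
  forall (eps eta : R) (x y : X) (f g : dual), 0 <= eps -> 0 <= eta ->
    E eps x f -> E' eta y g ->
    - (eps + eta) <= pairing (x - y) f - pairing (x - y) g.

Definition additive_enl (E : R -> X -> set dual) : Prop := mutually_additive E E.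

Definition maximally_additive (T : X -> set dual) (h : X -> dual -> \bar R) : Prop :=
  additive_enl (Lenl h) /\
  forall g, HT T g -> additive_enl (Lenl g) ->
    (forall eps x, 0 <= eps -> Lenl h eps x `<=` Lenl g eps x) ->
    forall eps x, 0 <= eps -> Lenl h eps x = Lenl g eps x.

End Dual.

(* Main.v *)
Require Import Defs.
From HB Require Import structures.
From mathcomp Require Import all_boot all_order all_algebra.
From mathcomp Require Import all_classical all_reals all_analysis.
From mathcomp Require Import ring lra.
Set Implicit Arguments. Unset Strict Implicit. Unset Printing Implicit Defensive.
Import Order.TTheory GRing.Theory Num.Theory.
Import numFieldNormedType.Exports.
Local Open Scope classical_set_scope.
Local Open Scope ring_scope.
Lemma dfun0 (R : realType) (X : normedModType R) (f : dual X) : f 0 = 0.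
Proof.
by apply: (@addrI _ (f 0)); rewrite addr0 -dfunD addr0.
Qed.

Lemma dfunB (R : realType) (X : normedModType R) (f : dual X) x y :
  f (x - y) = f x - f y.
Proof.
rewrite dfunD -scaleN1r dfunZ; by rewrite mulN1r.
Qed.

Lemma dfun_bounded (R : realType) (X : normedModType R) (f : dual X) :
  exists C, 0 < C /\ forall w, `|f w| <= C * `|w|.
Proof.
have : (f : X -> R) @ (0:X) --> f 0 := @dfun_cont _ _ f 0.
move=> /cvgrPdist_lt /(_ 1 ltr01) H.
move: H => /nbhs_normP [d /= d0 Hd].
exists (2 / d); split; first by rewrite divr_gt0.
move=> w; have [->|w0] := eqVneq w 0; first by rewrite dfun0 !normr0 mulr0.
have nw : 0 < `|w| by rewrite normr_gt0.
set a := d / 2 / `|w|.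
have a0 : 0 < a by rewrite /a !divr_gt0.
have Ht : `|f (a *: w)| < 1.
  have := Hd (a *: w); rewrite /ball_ /= sub0r normrN dfun0 sub0r normrN; apply.
  rewrite normrZ gtr0_norm // /a divfK ?gt_eqF //.
  lra.
rewrite dfunZ normrM gtr0_norm // in Ht.
have : `|f w| < 1 / a by rewrite ltr_pdivlMr // mulrC.
rewrite /a => H; apply: ltW; apply: (lt_le_trans H).
rewrite le_eqVlt; apply/orP; left; apply/eqP; field; rewrite ?gt_eqF //.
Qed.

Lemma ddist_bound (R : realType) (X : normedModType R) (v f : dual X) (y : X) :
  `|v y - f y| <= ddist v f * `|y|.
Proof.
have [->|y0] := eqVneq y 0; first by rewrite !dfun0 subrr normr0 normr0 mulr0.
have ny : 0 < `|y| by rewrite normr_gt0.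
have [Cv [Cv0 HCv]] := dfun_bounded v.
have [Cf [Cf0 HCf]] := dfun_bounded f.
have hub : has_ubound [set `|v z - f z| | z in [set z : X | `|z| <= 1]].
  exists (Cv + Cf) => _ [z /= z1 <-].
  apply: (le_trans (ler_normB _ _)); apply: lerD.
    apply: (le_trans (HCv z)). rewrite -[X in _ <= X]mulr1. by apply: ler_wpM2l; [exact: ltW|].
  apply: (le_trans (HCf z)). rewrite -[X in _ <= X]mulr1. by apply: ler_wpM2l; [exact: ltW|].
have H := ub_le_sup hub.
have := H _ (ex_intro2 _ _ (`|y|^-1 *: y) _ erefl).
rewrite /= normrZ normfV normr_id mulVf ?gt_eqF // => /(_ (le_refl _)).
rewrite !dfunZ -mulrBr normrM normfV normr_id /ddist => Hle.
by rewrite -ler_pdivrMr // mulrC.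
Qed.

Definition pi_le (R : realType) (X : normedModType R) (phi : X -> dual X -> \bar R) :=
  forall x f, ((pairing x f)%:E <= phi x f)%E.

Lemma FY (R : realType) (X : normedModType R) (phi : X -> dual X -> \bar R) x f y g :
  ((pairing y f + pairing x g)%:E - phi y g <= hstar_i phi x f)%E.
Proof. by apply: ereal_sup_ubound; exists (y, g). Qed.

Lemma hstar_anti (R : realType) (X : normedModType R) (phi psi : X -> dual X -> \bar R) :
  (forall x f, (phi x f <= psi x f)%E) -> forall x f, (hstar_i psi x f <= hstar_i phi x f)%E.
Proof.
move=> H x f; apply: ge_ereal_sup => _ [[y g] _ <-].
apply: le_trans (FY phi x f y g); apply: leeB => //.
Qed.

Lemma biconj (R : realType) (X : normedModType R) (phi : X -> dual X -> \bar R) :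
  pi_le phi -> forall x f, (hstar_i (hstar_i phi) x f <= phi x f)%E.
Proof.
move=> Hp x f; case E: (phi x f) => [s| |]; last first.
- by have := Hp x f; rewrite E.
- by rewrite leey.
apply: ge_ereal_sup => _ [[y g] _ <-] /=.
have := FY phi y g x f; rewrite E.
case: (hstar_i phi y g) => [t| |] //=.
  rewrite -EFinB !lee_fin => H. rewrite /pairing in H *. lra.
by move=> _; rewrite addeNy leNye.
Qed.

Lemma additive_iff (R : realType) (X : normedModType R) (phi psi : X -> dual X -> \bar R) :
  pi_le phi -> pi_le psi ->
  mutually_additive (Lenl phi) (Lenl psi) <-> forall x f, (hstar_i phi x f <= psi x f)%E.
Proof.
move=> Hp Hq; split.
- move=> MA x f; case Eq: (psi x f) => [r| |]; last first.
  + by have := Hq x f; rewrite Eq.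
  + by rewrite leey.
  apply: ge_ereal_sup => _ [[y g] _ <-] /=.
  case Ep: (phi y g) => [s| |]; last first.
  + by have := Hp y g; rewrite Ep.
  + by rewrite /= addeNy leNye.
  have Hs := Hp y g; have Hr := Hq x f; rewrite Ep lee_fin in Hs; rewrite Eq lee_fin in Hr.
  have e0 : 0 <= s - pairing y g by rewrite subr_ge0.
  have n0 : 0 <= r - pairing x f by rewrite subr_ge0.
  have L1 : Lenl phi (s - pairing y g) y g by rewrite /Lenl /= Ep lee_fin addrC subrK.
  have L2 : Lenl psi (r - pairing x f) x f by rewrite /Lenl /= Eq lee_fin addrC subrK.
  have := MA _ _ _ _ _ _ e0 n0 L1 L2.
  rewrite -EFinB lee_fin /pairing !dfunB => H; lra.
- move=> H eps eta x y f g e0 n0 Hx Hy.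
  rewrite /Lenl /= in Hx Hy.
  have := le_trans (le_trans (FY phi y g x f) (H y g)) Hy.
  case Ep: (phi x f) Hx => [s| |] Hx; last first.
  + by have := Hp x f; rewrite Ep.
  + by move: Hx; rewrite leye_eq.
  rewrite lee_fin in Hx.
  rewrite -EFinB lee_fin /pairing !dfunB => H2.
  rewrite /pairing in Hx; lra.
Qed.

Lemma hstar_lsc (R : realType) (X : normedModType R) (phi : X -> dual X -> \bar R) :
  pi_le phi -> lsc (hstar_i phi).
Proof.
move=> Hp u v x f r Hu Hv Hn; apply: ge_ereal_sup => _ [[y g] _ <-] /=.
case Ep: (phi y g) => [s| |]; last first.
- by have := Hp y g; rewrite Ep.
- by rewrite /= addeNy leNye.
have Hn' : forall n, v n y + g (u n) - s <= r.
  move=> n; have := le_trans (FY phi (u n) (v n) y g) (Hn n).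
  by rewrite Ep -EFinB lee_fin.
rewrite -EFinB lee_fin; apply/ler_addgt0Pr => e e0.
have [Cg [Cg0 HCg]] := dfun_bounded g.
have ny : 0 <= `|y| by [].
have p1 : 0 < e / (2 * Cg) by rewrite divr_gt0 ?mulr_gt0.
have p2 : 0 < e / (2 * (`|y| + 1)) by rewrite divr_gt0 ?mulr_gt0 ?ltr_wpDl.
have A := @cvgr_dist_lt _ _ _ _ _ _ _ Hu _ p1.
have B := @cvgr_dist_lt _ _ _ _ _ _ _ Hv _ p2.
have [n [/= H1 H2]] := filter_ex (filterI (A _) (B _)).
rewrite sub0r normrN normr_id in H1.
rewrite sub0r normrN in H2.
have G1 : `|g (u n) - g x| <= e / 2.
  rewrite -dfunB; apply: (le_trans (HCg _)).
  rewrite ltr_pdivlMr ?mulr_gt0 // in H1.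
  have := normr_ge0 (u n - x); nra.
have G2 : `|v n y - f y| <= e / 2.
  apply: (le_trans (ddist_bound _ _ _)).
  rewrite ltr_pdivlMr ?mulr_gt0 ?ltr_wpDl // in H2.
  have := ler_norm (ddist (v n) f); have := normr_ge0 (ddist (v n) f).
  set d := ddist (v n) f; set a := `|d|; set b := `|y|. move: ny H2; rewrite -/b -/a => ny H2 Ha Hb.
  nra.
have := Hn' n; move/ler_normlP: G1 => [G1a G1b]; move/ler_normlP: G2 => [G2a G2b].
rewrite /pairing; lra.
Qed.

Lemma hstar_convex (R : realType) (X : normedModType R) (phi : X -> dual X -> \bar R) :
  pi_le phi -> convex_fun (hstar_i phi).
Proof.
move=> Hp t x1 x2 f1 f2 k /andP[t0 t1] Hk; apply: ge_ereal_sup => _ [[y g] _ <-] /=.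
case Ep: (phi y g) => [s| |]; last first.
- by have := Hp y g; rewrite Ep.
- by rewrite /= addeNy leNye.
have F1 := FY phi x1 f1 y g; have F2 := FY phi x2 f2 y g; rewrite Ep in F1 F2.
have tt0 : (0 <= t%:E)%E by rewrite lee_fin ltW.
have tt1 : (0 <= (1 - t)%:E)%E by rewrite lee_fin subr_ge0 ltW.
apply: le_trans (leeD (lee_wpmul2l tt0 F1) (lee_wpmul2l tt1 F2)).
rewrite -!EFinB -!EFinM -EFinD lee_fin /pairing Hk dfunD !dfunZ.
rewrite le_eqVlt; apply/orP; left; apply/eqP; ring.
Qed.

Lemma hstar_ge_pi (R : realType) (X : normedModType R) (T : X -> set (dual X))
  (phi : X -> dual X -> \bar R) :
  maximal_monotone T -> (forall x f, T x f -> phi x f = (pairing x f)%:E) ->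
  pi_le (hstar_i phi).
Proof.
move=> [Hmon Hmax] Hg x f; rewrite leNgt; apply/negP => Hlt.
have Txf : T x f.
  apply: Hmax => y g Tyg; have := le_lt_trans (FY phi x f y g) Hlt.
  by rewrite Hg // -EFinB lte_fin /pairing !dfunB => H; lra.
have := le_lt_trans (FY phi x f x f) Hlt; rewrite Hg // -EFinB lte_fin; lra.
Qed.

Lemma maxadd_fixed (R : realType) (X : normedModType R) (T : X -> set (dual X))
  (h : X -> dual X -> \bar R) :
  maximal_monotone T -> HT T h -> maximally_additive T h ->
  forall x f, (h x f <= hstar_i h x f)%E.
Proof.
move=> MT [hl [hc [ph hg]]] [Hadd Hmax] qx qf.
set k := hstar_i h.
have pk : pi_le k := hstar_ge_pi MT hg.
have kh : forall y g, (k y g <= h y g)%E by apply/(additive_iff ph ph).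
case Ek: (k qx qf) => [c| |]; last first.
- by have := pk qx qf; rewrite Ek.
- by rewrite leey.
set a := fun (y : X) (g : dual X) => pairing y qf + pairing qx g - c.
set m := fun y g => maxe (k y g) (a y g)%:E.
set g0 := hstar_i m.
have km : forall y g, (k y g <= m y g)%E by move=> y g; rewrite le_max lexx.
have am : forall y g, ((a y g)%:E <= m y g)%E by move=> y g; rewrite le_max lexx orbT.
have pm : pi_le m by move=> y g; apply: le_trans (pk y g) (km y g).
have mh : forall y g, (m y g <= h y g)%E.
  move=> y g; rewrite ge_max kh /=.
  have := FY h qx qf y g; rewrite -/k Ek.
  case: (h y g) (ph y g) => [w| |] //= _; last by rewrite leey.
  by rewrite -EFinB !lee_fin /a => H; lra.
have g0h : forall y g, (g0 y g <= h y g)%E.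
  by move=> y g; apply: le_trans (hstar_anti km y g) (biconj ph y g).
have cq : pairing qx qf <= c by have := pk qx qf; rewrite Ek lee_fin.
have mq : m qx qf = c%:E.
  rewrite /m Ek; apply/eqP; rewrite eq_le ge_max lexx le_max lexx /= !andbT.
  by rewrite lee_fin /a; lra.
have mg0 : forall y g, (m y g <= g0 y g)%E.
  move=> y g; rewrite ge_max; apply/andP; split.
    by apply: hstar_anti.
  have := FY m y g qx qf; rewrite mq -EFinB /a.
  apply: le_trans; rewrite lee_fin le_eqVlt; apply/orP; left; apply/eqP; ring.
have pg0 : pi_le g0 by move=> y g; apply: le_trans (pm y g) (mg0 y g).
have HTg0 : HT T g0.
  split; first exact: hstar_lsc.
  split; first exact: hstar_convex.
  split=> // y g Tyg; apply/eqP; rewrite eq_le pg0 andbT -(hg _ _ Tyg); exact: g0h.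
have addg0 : additive_enl (Lenl g0).
  apply/(additive_iff pg0 pg0) => y g.
  exact: le_trans (biconj pm y g) (mg0 y g).
have incl : forall eps x, 0 <= eps -> Lenl h eps x `<=` Lenl g0 eps x.
  by move=> eps x _ f' Hf'; rewrite /Lenl /= in Hf' *; apply: le_trans Hf'.
have e0 : 0 <= c - pairing qx qf by rewrite subr_ge0.
have Heq := Hmax g0 HTg0 addg0 incl _ qx e0.
have g0q : Lenl g0 (c - pairing qx qf) qx qf.
  rewrite /Lenl /= addrC subrK; apply: ge_ereal_sup => _ [[y g] _ <-] /=.
  case: (m y g) (pm y g) (am y g) => [w| |] //= _; last by rewrite addeNy leNye.
  by rewrite -EFinB !lee_fin /a => H; lra.
by rewrite -Heq /Lenl /= addrC subrK in g0q.
Qed.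

Theorem proposition3p2 (R : realType) (X : completeNormedModType R)
  (T : X -> set (dual X)) (h h' : X -> dual X -> \bar R) :
  reflexive_space X -> maximal_monotone T -> HT T h -> HT T h' ->
  [/\ (mutually_additive (Lenl h) (Lenl h') <->
         (forall x f, (hstar_i h x f <= h' x f)%E)),
      (additive_enl (Lenl h) <-> (forall x f, (hstar_i h x f <= h x f)%E)),
      ((forall x f, h x f = hstar_i h x f) <-> maximally_additive T h),
      mutually_additive (Lenl h) (Lenl (hstar_i h)) &
      (forall g, HT T g -> mutually_additive (Lenl h) (Lenl g) ->
         forall eps x, 0 <= eps -> Lenl g eps x `<=` Lenl (hstar_i h) eps x)].
Proof.
move=> _ MT HTh HTh'.
have [hl [hc [ph hg]]] := HTh.
have [_ [_ [ph' _]]] := HTh'.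
split.
- exact: additive_iff.
- exact: additive_iff.
- split.
  + move=> Hfix; split; first by apply/(additive_iff ph ph) => x f; rewrite -Hfix.
    move=> g [gl [gc [pg gg]]] addg incl.
    have gh : forall y g', (g y g' <= h y g')%E.
      move=> y g'; case Eh: (h y g') => [s| |]; last first.
      * by have := ph y g'; rewrite Eh.
      * by rewrite leey.
      have e0 : 0 <= s - pairing y g' by have := ph y g'; rewrite Eh lee_fin subr_ge0.
      have L : Lenl h (s - pairing y g') y g' by rewrite /Lenl /= Eh addrC subrK.
      by have := incl _ _ e0 _ L; rewrite /Lenl /= addrC subrK.
    have hg' : forall y g', (h y g' <= g y g')%E.
      move=> y g'; rewrite Hfix; apply: le_trans (hstar_anti gh y g') _.
      exact: ((additive_iff pg pg).1 addg y g').
    have -> : g = h.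
      apply: funext => y; apply: funext => g'; apply/le_anti/andP; split; [exact: gh|exact: hg'].
    by [].
  + move=> MA x f; apply/le_anti/andP; split; first exact: (maxadd_fixed MT HTh MA).
    by case: MA => /(additive_iff ph ph).
- by apply/(additive_iff ph (hstar_ge_pi MT hg)).
- move=> g [_ [_ [pg _]]] MA eps x e0 f'; rewrite /Lenl /=; apply: le_trans.
  exact: ((additive_iff ph pg).1 MA x f').
Qed.
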